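(* Let $$J(\mu)=\int_{\max(-\mu,-1)}^{1}\frac{dx}{\sqrt{1-x^2}\sqrt{\mu+x}},\qquad \mu\ge-1.$$ Then there is an absolute constant $C$ such that $|\mu-1|\,|J'(\mu)|\le C\,J(\mu)$ for all $\mu>-1$, $\mu\neq1$.
   Context: $J$ is the kernel of the representation formula for the radial $2+1$-dimensional flat wave equation; it is smooth on $(-1,1)\cup(1,\infty)$. *)

(* Defs.v *)
From Stdlib Require Import Reals.
Open Scope R_scope.

Definition improper_integral (f : R -> R) (a b L : R) : Prop :=
  a < b /\
  (forall s t, a < s -> s <= t -> t < b -> inhabited (Riemann_integrable f s t)) /\
  (forall eps, 0 < eps -> exists delta, 0 < delta /\
     forall s t (pr : Riemann_integrable f s t),
       a < s -> s < a + delta -> b - delta < t -> t < b ->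
       Rabs (RiemannInt pr - L) < eps).

Definition J_integrand (mu x : R) : R :=
  / (sqrt (1 - x ^ 2) * sqrt (mu + x)).

Definition J_lower (mu : R) : R := Rmax (- mu) (-1).

Definition is_J_value (mu v : R) : Prop :=
  improper_integral (J_integrand mu) (J_lower mu) 1 v.

(* Main.v *)
Require Import Defs.
From Stdlib Require Import Reals Lra.
From Coquelicot Require Import Coquelicot.
Open Scope R_scope.

Lemma cos_strict (t : R) : 0 < t < PI -> -1 < cos t < 1.
Proof.
  intros [H1 H2]. pose proof PI_RGT_0.
  split.
  - rewrite <- cos_PI. apply cos_decreasing_1; lra.
  - rewrite <- cos_0. apply cos_decreasing_1; lra.
Qed.

Lemma cos_le_mono (x y : R) : 0 <= x -> x <= y -> y <= PI -> cos y <= cos x.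
Proof.
  intros. destruct (Req_dec x y). subst; lra.
  left; apply cos_decreasing_1; lra.
Qed.

Lemma cont_of_pt (f : R -> R) x : continuity_pt f x -> continuous f x.
Proof. intros H. now apply continuity_pt_filterlim. Qed.

Lemma cov (f G : R -> R) (a u w : R) :
  a < 1 ->
  (forall x, a < x < 1 -> continuous f x) ->
  (forall t, 0 < t < PI -> G t = (1-a)/2 * sin t * f ((1+a)/2 - (1-a)/2 * cos t)) ->
  0 < u < PI -> 0 < w < PI ->
  RInt f ((1+a)/2 - (1-a)/2 * cos u) ((1+a)/2 - (1-a)/2 * cos w) = RInt G u w.
Proof.
  intros Ha Hf HG Hu Hw.
  assert (Hb : forall t, Rmin u w <= t <= Rmax u w -> 0 < t < PI).
  { intros t [H1 H2]. split.
    - eapply Rlt_le_trans; [|exact H1]. apply Rmin_glb_lt; lra.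
    - eapply Rle_lt_trans; [exact H2|]. apply Rmax_lub_lt; lra. }
  assert (E := RInt_comp f (fun t => (1+a)/2 - (1-a)/2 * cos t)
                (fun t => (1-a)/2 * sin t) u w).
  simpl in E. rewrite <- E.
  - apply RInt_ext. intros t Ht. rewrite HG. reflexivity.
    apply Hb. lra.
  - intros t Ht. apply Hf. destruct (cos_strict t (Hb t Ht)). split; nra.
  - intros t Ht. split.
    + auto_derive; auto. ring.
    + apply cont_of_pt. apply continuity_pt_mult. apply continuity_pt_const.
      intros ? ?; auto. apply continuity_sin.
Qed.

Lemma improper_eq (f G : R -> R) (a M v : R) :
  a < 1 ->
  (forall x, a < x < 1 -> continuous f x) ->
  (forall t, continuous G t) ->
  (forall t, Rabs (G t) <= M) ->
  (forall t, 0 < t < PI -> G t = (1-a)/2 * sin t * f ((1+a)/2 - (1-a)/2 * cos t)) ->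
  improper_integral f a 1 v -> v = RInt G 0 PI.
Proof.
  intros Ha Hf HG HM HGf [_ [Hint Hlim]].
  pose proof PI_RGT_0 as HPI.
  set (r := (1-a)/2). set (c := (1+a)/2).
  assert (Hr: 0 < r) by (unfold r; lra).
  assert (HM0: 0 <= M) by (specialize (HM 0); pose proof (Rabs_pos (G 0)); lra).
  assert (Hex: forall u w, ex_RInt G u w)
    by (intros; apply (ex_RInt_continuous (V:=R_CompleteNormedModule)); intros; apply HG).
  set (I := RInt G 0 PI).
  assert (key: forall eps, 0 < eps -> Rabs (v - I) < 3 * eps).
  { intros eps Heps.
    set (d0 := Rmin (PI/2) (eps/(M+1))).
    assert (Hd0: 0 < d0 <= PI/2).
    { split. apply Rmin_glb_lt. lra. apply Rdiv_lt_0_compat; lra. apply Rmin_l. }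
    assert (Hd0e: d0 * M <= eps * M / (M+1)).
    { assert (d0 <= eps/(M+1)) by apply Rmin_r.
      replace (eps * M / (M+1)) with (eps/(M+1) * M) by (field; lra). nra. }
    assert (HeM: eps * M / (M+1) < eps).
    { apply (Rmult_lt_reg_r (M+1)). lra. field_simplify; lra. }
    assert (Hcd: 0 <= cos d0 < 1).
    { split. apply cos_ge_0; lra. rewrite <- cos_0. apply cos_decreasing_1; lra. }
    set (eta := r * (1 - cos d0)).
    assert (Heta: 0 < eta <= r) by (unfold eta; split; nra).
    destruct (Hlim eps Heps) as [delta [Hdel Hl]].
    set (m := Rmin delta eta).
    assert (Hm: 0 < m /\ m <= eta /\ m <= delta).
    { split. apply Rmin_glb_lt; lra. split. apply Rmin_r. apply Rmin_l. }
    set (s := a + m/2). set (t := 1 - m/2).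
    assert (Hrd : r = (1-a)/2) by reflexivity.
    destruct (Hint s t) as [pr]; unfold s, t in *; try lra.
    specialize (Hl s t pr). unfold s,t in Hl.
    assert (Hl' : Rabs (RiemannInt pr - v) < eps) by (apply Hl; lra).
    clear Hl.
    set (q := m / (2*r)).
    assert (Hq: 0 < q <= 1/2).
    { unfold q. split. apply Rdiv_lt_0_compat; lra.
      apply (Rmult_le_reg_r (2*r)). lra. field_simplify; lra. }
    assert (Hq2 : m = 2 * r * q) by (unfold q; field; lra).
    set (ts := acos (1 - q)). set (tt := acos (-1 + q)).
    assert (Hts: 0 < ts < PI) by (apply acos_bound_lt; lra).
    assert (Htt: 0 < tt < PI) by (apply acos_bound_lt; lra).
    assert (Hcts: cos ts = 1 - q) by (apply cos_acos; lra).
    assert (Hctt: cos tt = -1 + q) by (apply cos_acos; lra).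
    assert (Hts0: ts < d0).
    { destruct (Rlt_or_le ts d0) as [h|h]; auto.
      assert (cos ts <= cos d0) by (apply cos_le_mono; lra).
      exfalso. assert (r * (q - (1 - cos d0)) >= 0) by (apply Rle_ge; apply Rmult_le_pos; lra).
      unfold eta in Hm, Heta. nra. }
    assert (Htt0: PI - d0 < tt).
    { destruct (Rlt_or_le (PI - d0) tt) as [h|h]; auto.
      assert (cos (PI - d0) <= cos tt) by (apply cos_le_mono; lra).
      rewrite Rtrigo_facts.cos_pi_minus in H.
      exfalso. assert (r * (q - (1 - cos d0)) >= 0) by (apply Rle_ge; apply Rmult_le_pos; lra).
      unfold eta in Hm, Heta. nra. }
    assert (Hcv : RiemannInt pr = RInt G ts tt).
    { rewrite <- RInt_Reals.
      rewrite <- (cov f G a ts tt); auto.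
      fold r c. rewrite Hcts, Hctt. f_equal; unfold c, r in *; lra. }
    assert (HI : I = RInt G 0 ts + RInt G ts tt + RInt G tt PI).
    { unfold I. rewrite <- (RInt_Chasles G 0 tt PI); auto.
      rewrite <- (RInt_Chasles G 0 ts tt); auto. }
    assert (B1 : Rabs (RInt G 0 ts) <= (ts - 0) * M).
    { apply abs_RInt_le_const; auto. lra. }
    assert (B2 : Rabs (RInt G tt PI) <= (PI - tt) * M).
    { apply abs_RInt_le_const; auto. lra. }
    rewrite Hcv in Hl'. rewrite HI.
    assert (ts * M <= d0 * M) by nra.
    assert ((PI - tt) * M <= d0 * M) by nra.
    revert Hl' B1 B2. unfold Rabs. repeat destruct Rcase_abs; intros; lra. }
  destruct (Req_dec v I) as [h|h]; auto.
  exfalso. assert (Hp: 0 < Rabs (v - I)) by (apply Rabs_pos_lt; lra).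
  specialize (key (Rabs (v - I) / 3)). lra.
Qed.

Definition P (a0 b0 a1 b1 m t : R) := (a0 + b0 * cos t) + m * (a1 + b1 * cos t).
Definition Gf a0 b0 a1 b1 m t := / sqrt (P a0 b0 a1 b1 m t).
Definition Df a0 b0 a1 b1 m t :=
  - (a1 + b1 * cos t) / (2 * (sqrt (P a0 b0 a1 b1 m t) * P a0 b0 a1 b1 m t)).

Lemma loc_int (lo hi mu : R) (Q : R -> Prop) :
  lo < mu < hi -> (forall y, lo < y < hi -> Q y) -> locally mu Q.
Proof.
  intros H HQ.
  assert (He : 0 < Rmin (mu - lo) (hi - mu)) by (apply Rmin_glb_lt; lra).
  exists (mkposreal _ He). intros y Hy.
  change (Rabs (y - mu) < Rmin (mu - lo) (hi - mu)) in Hy.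
  apply HQ. pose proof (Rmin_l (mu-lo) (hi-mu)). pose proof (Rmin_r (mu-lo) (hi-mu)).
  apply Rabs_lt_between' in Hy. lra.
Qed.

Lemma Gf_derive a0 b0 a1 b1 m t : 0 < P a0 b0 a1 b1 m t ->
  is_derive (fun u => Gf a0 b0 a1 b1 u t) m (Df a0 b0 a1 b1 m t).
Proof.
  intros HP. unfold Gf, Df. unfold P in *.
  auto_derive.
  - split. lra. split. intro h. apply sqrt_eq_0 in h; lra. auto.
  - assert (0 < sqrt (a0 + b0 * cos t + m * (a1 + b1 * cos t))) by (apply sqrt_lt_R0; lra).
    rewrite sqrt_sqrt by lra. field. split; lra.
Qed.

Lemma P_cont2 a0 b0 a1 b1 m t : continuity_2d_pt (P a0 b0 a1 b1) m t.
Proof.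
  unfold P.
  apply continuity_2d_pt_plus.
  - apply continuity_2d_pt_plus. apply continuity_2d_pt_const.
    apply continuity_2d_pt_mult. apply continuity_2d_pt_const.
    apply continuity_1d_2d_pt_comp with (f := cos). apply continuity_cos.
    apply continuity_2d_pt_id2.
  - apply continuity_2d_pt_mult. apply continuity_2d_pt_id1.
    apply continuity_2d_pt_plus. apply continuity_2d_pt_const.
    apply continuity_2d_pt_mult. apply continuity_2d_pt_const.
    apply continuity_1d_2d_pt_comp with (f := cos). apply continuity_cos.
    apply continuity_2d_pt_id2.
Qed.

Lemma Gf_cont a0 b0 a1 b1 m t : 0 < P a0 b0 a1 b1 m t ->
  continuous (Gf a0 b0 a1 b1 m) t.
Proof.
  intros HP. apply cont_of_pt. unfold Gf.
  apply continuity_pt_inv.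
  apply continuity_pt_comp with (f1 := P a0 b0 a1 b1 m).
  - unfold P.
    apply continuity_pt_plus. apply continuity_pt_plus. apply continuity_pt_const. intros ? ?; auto.
    apply continuity_pt_mult. apply continuity_pt_const. intros ? ?; auto. apply continuity_cos.
    apply continuity_pt_mult. apply continuity_pt_const. intros ? ?; auto.
    apply continuity_pt_plus. apply continuity_pt_const. intros ? ?; auto.
    apply continuity_pt_mult. apply continuity_pt_const. intros ? ?; auto. apply continuity_cos.
  - apply sqrt_continuity_pt; auto.
  - intro h. apply sqrt_eq_0 in h; lra.
Qed.

Lemma deriv_F a0 b0 a1 b1 lo hi mu :
  lo < mu < hi -> (forall m t, lo < m < hi -> 0 < P a0 b0 a1 b1 m t) ->
  is_derive (fun m => RInt (Gf a0 b0 a1 b1 m) 0 PI) mu (RInt (Df a0 b0 a1 b1 mu) 0 PI).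
Proof.
  intros Hmu HP.
  assert (E : RInt (Df a0 b0 a1 b1 mu) 0 PI =
              RInt (fun t => Derive (fun u => Gf a0 b0 a1 b1 u t) mu) 0 PI).
  { apply RInt_ext. intros t _. symmetry. apply is_derive_unique. apply Gf_derive. auto. }
  rewrite E. apply (is_derive_RInt_param (fun m t => Gf a0 b0 a1 b1 m t)).
  - apply (loc_int lo hi). auto. intros y Hy t _. eexists. apply Gf_derive. auto.
  - intros t _.
    assert (He : 0 < Rmin (mu - lo) (hi - mu)) by (apply Rmin_glb_lt; lra).
    apply continuity_2d_pt_ext_loc with (f := Df a0 b0 a1 b1).
    + exists (mkposreal _ He). intros u v Hu _. simpl in Hu.
      symmetry. apply is_derive_unique. apply Gf_derive. apply HP.
      pose proof (Rmin_l (mu-lo) (hi-mu)). pose proof (Rmin_r (mu-lo) (hi-mu)).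
      apply Rabs_lt_between' in Hu. lra.
    + assert (HPm := HP mu t Hmu).
      unfold Df. unfold Rdiv.
      apply continuity_2d_pt_mult.
      * apply continuity_2d_pt_opp. apply continuity_2d_pt_plus. apply continuity_2d_pt_const.
        apply continuity_2d_pt_mult. apply continuity_2d_pt_const.
        apply continuity_1d_2d_pt_comp with (f := cos). apply continuity_cos.
        apply continuity_2d_pt_id2.
      * apply continuity_2d_pt_inv.
        apply continuity_2d_pt_mult. apply continuity_2d_pt_const.
        apply continuity_2d_pt_mult.
        apply continuity_1d_2d_pt_comp with (f := sqrt). apply sqrt_continuity_pt; auto.
        apply P_cont2. apply P_cont2.
        assert (0 < sqrt (P a0 b0 a1 b1 mu t)) by (apply sqrt_lt_R0; lra).
        apply Rgt_not_eq. apply Rmult_gt_0_compat. lra. apply Rmult_gt_0_compat; lra.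
  - apply (loc_int lo hi). auto. intros y Hy.
    apply (ex_RInt_continuous (V:=R_CompleteNormedModule)). intros z _.
    apply Gf_cont. auto.
Qed.

Lemma integrand_id mu x k Pv : 0 < k -> 0 < Pv -> (1 - x^2)*(mu+x) = k^2 * Pv ->
  0 <= 1 - x^2 -> 0 <= mu + x -> k * J_integrand mu x = / sqrt Pv.
Proof.
  intros Hk HP E H1 H2. unfold J_integrand.
  rewrite <- sqrt_mult by auto. rewrite E. rewrite sqrt_mult by (try apply pow2_ge_0; lra).
  rewrite sqrt_pow2 by lra.
  assert (0 < sqrt Pv) by (apply sqrt_lt_R0; lra). field. split; lra.
Qed.

Lemma J_integrand_cont mu x : 0 < 1 - x^2 -> 0 < mu + x -> continuous (J_integrand mu) x.
Proof.
  intros H1 H2. apply cont_of_pt. unfold J_integrand.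
  apply continuity_pt_inv.
  - apply continuity_pt_mult.
    + apply continuity_pt_comp with (f1 := fun x => 1 - x^2).
      * apply continuity_pt_minus. apply continuity_pt_const. intros ? ?; auto.
        apply derivable_continuous_pt. apply derivable_pt_pow.
      * apply sqrt_continuity_pt; auto.
    + apply continuity_pt_comp with (f1 := fun x => mu + x).
      * apply continuity_pt_plus. apply continuity_pt_const. intros ? ?; auto.
        apply derivable_continuous_pt. apply derivable_pt_id.
      * apply sqrt_continuity_pt; auto.
  - assert (0 < sqrt (1 - x^2)) by (apply sqrt_lt_R0; lra).
    assert (0 < sqrt (mu + x)) by (apply sqrt_lt_R0; lra). nra.
Qed.

Lemma Gf_bound a0 b0 a1 b1 m t L : 0 < L -> L <= P a0 b0 a1 b1 m t ->
  Rabs (Gf a0 b0 a1 b1 m t) <= / sqrt L.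
Proof.
  intros HL HLP. unfold Gf.
  assert (0 < sqrt L) by (apply sqrt_lt_R0; lra).
  assert (sqrt L <= sqrt (P a0 b0 a1 b1 m t)) by (apply sqrt_le_1; lra).
  rewrite Rabs_right. apply Rinv_le_contravar; lra.
  left. apply Rinv_0_lt_compat. lra.
Qed.

Lemma sin2' t : sin t ^ 2 = 1 - cos t ^ 2.
Proof. pose proof (sin2_cos2 t). unfold Rsqr in H. simpl. lra. Qed.

Lemma pointwise mu p1 Pv : 0 < Pv -> Rabs (mu - 1) * Rabs p1 <= Pv ->
  Rabs (mu - 1) * Rabs (- p1 / (2 * (sqrt Pv * Pv))) <= 1/2 * / sqrt Pv.
Proof.
  intros HP H. assert (HS: 0 < sqrt Pv) by (apply sqrt_lt_R0; lra).
  unfold Rdiv. rewrite Rabs_mult, Rabs_Ropp, Rabs_inv.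
  rewrite (Rabs_right (2 * (sqrt Pv * Pv))) by nra.
  replace (Rabs (mu - 1) * (Rabs p1 * / (2 * (sqrt Pv * Pv))))
    with ((Rabs (mu - 1) * Rabs p1) * / (2 * (sqrt Pv * Pv))) by ring.
  replace (1 * / 2 * / sqrt Pv) with (Pv * / (2 * (sqrt Pv * Pv))) by (field; lra).
  apply Rmult_le_compat_r. left. apply Rinv_0_lt_compat. nra. auto.
Qed.

Lemma Df_cont a0 b0 a1 b1 m t : 0 < P a0 b0 a1 b1 m t ->
  continuity_pt (Df a0 b0 a1 b1 m) t.
Proof.
  intros HP.
  assert (HPc : continuity_pt (P a0 b0 a1 b1 m) t).
  { unfold P.
    apply continuity_pt_plus. apply continuity_pt_plus. apply continuity_pt_const. intros ? ?; auto.
    apply continuity_pt_mult. apply continuity_pt_const. intros ? ?; auto. apply continuity_cos.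
    apply continuity_pt_mult. apply continuity_pt_const. intros ? ?; auto.
    apply continuity_pt_plus. apply continuity_pt_const. intros ? ?; auto.
    apply continuity_pt_mult. apply continuity_pt_const. intros ? ?; auto. apply continuity_cos. }
  unfold Df. apply continuity_pt_div.
  - apply continuity_pt_opp. apply continuity_pt_plus. apply continuity_pt_const. intros ? ?; auto.
    apply continuity_pt_mult. apply continuity_pt_const. intros ? ?; auto. apply continuity_cos.
  - apply continuity_pt_mult. apply continuity_pt_const. intros ? ?; auto.
    apply continuity_pt_mult; auto.
    apply continuity_pt_comp with (f1 := P a0 b0 a1 b1 m); auto.
    apply sqrt_continuity_pt; auto.
  - assert (0 < sqrt (P a0 b0 a1 b1 m t)) by (apply sqrt_lt_R0; lra). nra.
Qed.

Lemma bound_int a0 b0 a1 b1 mu :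
  (forall t, 0 < P a0 b0 a1 b1 mu t) ->
  (forall t, Rabs (mu - 1) * Rabs (a1 + b1 * cos t) <= P a0 b0 a1 b1 mu t) ->
  Rabs (mu - 1) * Rabs (RInt (Df a0 b0 a1 b1 mu) 0 PI) <=
  1/2 * RInt (Gf a0 b0 a1 b1 mu) 0 PI.
Proof.
  intros HP Hb. pose proof PI_RGT_0.
  assert (exD : ex_RInt (Df a0 b0 a1 b1 mu) 0 PI).
  { apply (ex_RInt_continuous (V:=R_CompleteNormedModule)). intros z _.
    apply cont_of_pt, Df_cont; auto. }
  assert (exA : ex_RInt (fun t => Rabs (Df a0 b0 a1 b1 mu t)) 0 PI).
  { apply (ex_RInt_continuous (V:=R_CompleteNormedModule)). intros z _.
    apply cont_of_pt. apply continuity_pt_comp with (f2 := Rabs).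
    apply Df_cont; auto. apply Rcontinuity_abs. }
  assert (exG : ex_RInt (Gf a0 b0 a1 b1 mu) 0 PI).
  { apply (ex_RInt_continuous (V:=R_CompleteNormedModule)). intros z _.
    apply Gf_cont; auto. }
  eapply Rle_trans.
  { apply Rmult_le_compat_l. apply Rabs_pos. apply abs_RInt_le. lra. auto. }
  assert (E1 := RInt_scal (V:=R_CompleteNormedModule) _ 0 PI (Rabs (mu-1)) exA).
  assert (E2 := RInt_scal (V:=R_CompleteNormedModule) _ 0 PI (1/2) exG).
  simpl in E1, E2. unfold scal in E1, E2. simpl in E1, E2. unfold mult in E1, E2. simpl in E1, E2.
  rewrite <- E1, <- E2.
  apply RInt_le. lra.
  - exact (ex_RInt_scal (V:=R_NormedModule) _ 0 PI (Rabs (mu-1)) exA).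
  - exact (ex_RInt_scal (V:=R_NormedModule) _ 0 PI (1/2) exG).
  - intros t _. unfold Gf, Df. apply pointwise; auto.
Qed.

Lemma caseA (J : R -> R) :
  (forall mu, -1 < mu -> mu <> 1 -> is_J_value mu (J mu)) ->
  forall m, 1 < m -> J m = RInt (Gf 0 (-1) 1 0 m) 0 PI.
Proof.
  intros HJ m Hm.
  assert (HP : forall t, m - 1 <= P 0 (-1) 1 0 m t).
  { intros t. unfold P. pose proof (COS_bound t). lra. }
  assert (H := HJ m ltac:(lra) ltac:(lra)). unfold is_J_value, J_lower in H.
  rewrite Rmax_right in H by lra.
  apply (improper_eq (J_integrand m) (Gf 0 (-1) 1 0 m) (-1) (/ sqrt (m - 1))); auto.
  - lra.
  - intros x Hx. apply J_integrand_cont; nra.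
  - intros t. apply Gf_cont. specialize (HP t); lra.
  - intros t. apply Gf_bound. lra. auto.
  - intros t Ht. symmetry.
    assert (0 < sin t) by (apply sin_gt_0; lra).
    destruct (cos_strict t Ht).
    replace ((1 + -1) / 2 - (1 - -1) / 2 * cos t) with (- cos t) by field.
    replace ((1 - -1) / 2 * sin t) with (sin t) by field.
    unfold Gf. apply integrand_id; auto.
    + specialize (HP t). lra.
    + unfold P. rewrite sin2'. ring.
    + nra.
    + lra.
Qed.

Lemma caseB (J : R -> R) :
  (forall mu, -1 < mu -> mu <> 1 -> is_J_value mu (J mu)) ->
  forall m, -1 < m < 1 -> J m = RInt (Gf (3/2) (-1/2) (-1/2) (-1/2) m) 0 PI.
Proof.
  intros HJ m Hm.
  assert (HP : forall t, 1 - m <= P (3/2) (-1/2) (-1/2) (-1/2) m t).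
  { intros t. unfold P. pose proof (COS_bound t). nra. }
  assert (H := HJ m ltac:(lra) ltac:(lra)). unfold is_J_value, J_lower in H.
  rewrite Rmax_left in H by lra.
  apply (improper_eq (J_integrand m) (Gf (3/2) (-1/2) (-1/2) (-1/2) m) (-m) (/ sqrt (1 - m))); auto.
  - lra.
  - intros x Hx. apply J_integrand_cont; nra.
  - intros t. apply Gf_cont. specialize (HP t); lra.
  - intros t. apply Gf_bound. lra. auto.
  - intros t Ht. symmetry.
    assert (0 < sin t) by (apply sin_gt_0; lra).
    destruct (cos_strict t Ht).
    unfold Gf. apply integrand_id; auto.
    + apply Rmult_lt_0_compat; lra.
    + specialize (HP t). lra.
    + unfold P. replace (((1 - - m)/2 * sin t)^2) with (((1 - -m)/2)^2 * sin t ^2) by ring.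
      rewrite sin2'. field.
    + set (x := (1 + - m) / 2 - (1 - - m) / 2 * cos t).
      assert (x < 1) by (unfold x; nra). assert (-m < x) by (unfold x; nra). nra.
    + set (x := (1 + - m) / 2 - (1 - - m) / 2 * cos t).
      assert (-m < x) by (unfold x; nra). nra.
Qed.

Theorem mainTheorem20 :
  exists C : R,
    forall J : R -> R,
      (forall mu, -1 < mu -> mu <> 1 -> is_J_value mu (J mu)) ->
      forall mu, -1 < mu -> mu <> 1 ->
        exists l, derivable_pt_lim J mu l /\
                  Rabs (mu - 1) * Rabs l <= C * J mu.
Proof.
  exists (1/2). intros J HJ mu Hmu Hne.
  destruct (Rlt_or_le 1 mu) as [h|h].
  - exists (RInt (Df 0 (-1) 1 0 mu) 0 PI). split.
    + apply is_derive_Reals.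
      apply is_derive_ext_loc with (f := fun m => RInt (Gf 0 (-1) 1 0 m) 0 PI).
      * apply (loc_int 1 (mu+1)). lra. intros y Hy. symmetry. apply (caseA J HJ). lra.
      * apply deriv_F with 1 (mu+1). lra.
        intros m t Hm. unfold P. pose proof (COS_bound t). lra.
    + rewrite (caseA J HJ mu h). apply bound_int.
      * intros t. unfold P. pose proof (COS_bound t). lra.
      * intros t. unfold P. pose proof (COS_bound t).
        rewrite (Rabs_right (mu - 1)) by lra.
        replace (1 + 0 * cos t) with 1 by ring. rewrite Rabs_R1. lra.
  - assert (h' : mu < 1) by lra.
    exists (RInt (Df (3/2) (-1/2) (-1/2) (-1/2) mu) 0 PI). split.
    + apply is_derive_Reals.
      apply is_derive_ext_loc with (f := fun m => RInt (Gf (3/2) (-1/2) (-1/2) (-1/2) m) 0 PI).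
      * apply (loc_int (-1) 1). lra. intros y Hy. symmetry. apply (caseB J HJ). lra.
      * apply deriv_F with (-1) 1. lra.
        intros m t Hm. unfold P. pose proof (COS_bound t). nra.
    + rewrite (caseB J HJ mu ltac:(lra)). apply bound_int.
      * intros t. unfold P. pose proof (COS_bound t). nra.
      * intros t. unfold P. pose proof (COS_bound t).
        rewrite (Rabs_left (mu - 1)) by lra.
        rewrite (Rabs_left1 (-1/2 + -1/2 * cos t)) by lra. nra.
Qed.
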